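(* Let $\epsilon>0$, and let $({\mathbf{x}}_1,{\mathbf{y}}_1,{\mathbf{y}}_2)\in\mathcal X_1\times\mathcal Y_1\times[0,B]^l$ be an $\epsilon$-KKT point of the reformulated problem $\min_{{\mathbf{x}}_1,{\mathbf{y}}_1,{\mathbf{y}}_2}\{f({\mathbf{x}}_1,{\mathbf{y}}_1):({\mathbf{y}}_1,{\mathbf{y}}_2)\text{ is a saddle point of }\tilde f({\mathbf{x}}_1,\cdot,\cdot)\}$ (as defined in the context) with associated penalty parameter $\rho\ge0$, and suppose $\epsilon\le\min\{\rho L_{\bar f}/4,\ \rho G\sqrt l/4\}$. Then $({\mathbf{x}}_1,{\mathbf{y}}_1)$ is an $O(\epsilon)$-KKT point of the constrained bilevel problem $\min_{{\mathbf{x}}_1,{\mathbf{y}}_1}\{f({\mathbf{x}}_1,{\mathbf{y}}_1): {\mathbf{y}}_1\in\arg\min_{{\mathbf{z}}_1}\{\bar f({\mathbf{x}}_1,{\mathbf{z}}_1):\bar{{\mathbf{g}}}({\mathbf{x}}_1,{\mathbf{z}}_1)\le0\}\}$.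
   Context: Setting: $f({\mathbf{x}}_1,{\mathbf{y}}_1)=f_1({\mathbf{x}}_1,{\mathbf{y}}_1)+f_2({\mathbf{x}}_1)$, $\bar f({\mathbf{x}}_1,{\mathbf{y}}_1)=\bar f_1({\mathbf{x}}_1,{\mathbf{y}}_1)+\bar f_2({\mathbf{y}}_1)$, $\bar{{\mathbf{g}}}=(\bar g_1,\dots,\bar g_l)$. Assumptions: $\mathcal X_1=\mathrm{dom} f_2$, $\mathcal Y_1=\mathrm{dom}\bar f_2$ compact; $f_1$ is $L_{\nabla f_1}$-smooth on $\mathcal X_1\times\mathcal Y_1$; $\bar f_1$ convex in ${\mathbf{y}}_1$ and $L_{\nabla\bar f_1}$-smooth; $\bar f$ is $L_{\bar f}$-Lipschitz on $\mathcal X_1\times\mathcal Y_1$; each $\bar g_i$ convex in ${\mathbf{y}}_1$, $\bar{{\mathbf{g}}}$ $L_{\nabla\bar{{\mathbf{g}}}}$-smooth and $L_{\bar{{\mathbf{g}}}}$-Lipschitz; $f_2,\bar f_2$ proper closed convex with exactly computable proximal operators; (Slater) there is $G>0$ such that for each ${\mathbf{x}}_1\in\mathcal X_1$ some $\hat{{\mathbf{y}}}_1\in\mathcal Y_1$ has $\bar g_i({\mathbf{x}}_1,\hat{{\mathbf{y}}}_1)\le-G$ for all $i$. $D_{\mathcal Y_1}$ = diameter of $\mathcal Y_1$, $B=2L_{\bar f}D_{\mathcal Y_1}/G$, $\tilde f({\mathbf{x}}_1,{\mathbf{z}}_1,{\mathbf{z}}_2)=\bar f({\mathbf{x}}_1,{\mathbf{z}}_1)+{\mathbf{z}}_2^\top\bar{{\mathbf{g}}}({\mathbf{x}}_1,{\mathbf{z}}_1)-\mathbf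 1_{[0,B]^l}({\mathbf{z}}_2)$. $\partial$ = Fréchet subdifferential. $\epsilon$-KKT point of the reformulated problem: $({\mathbf{x}}_1,{\mathbf{y}}_1,{\mathbf{y}}_2)$ such that there exist $\rho\ge0$ and $({\mathbf{z}}_1,{\mathbf{z}}_2)$ with $\mathrm{dist}(0,\partial_{({\mathbf{x}}_1,{\mathbf{y}}_1,{\mathbf{y}}_2)}[f({\mathbf{x}}_1,{\mathbf{y}}_1)+\rho(\tilde f({\mathbf{x}}_1,{\mathbf{y}}_1,{\mathbf{z}}_2)-\tilde f({\mathbf{x}}_1,{\mathbf{z}}_1,{\mathbf{y}}_2))])\le\epsilon$, $\mathrm{dist}(0,\rho\partial_{{\mathbf{z}}_1}\tilde f({\mathbf{x}}_1,{\mathbf{z}}_1,{\mathbf{y}}_2))\le\epsilon$, $\mathrm{dist}(0,\rho\partial_{{\mathbf{z}}_2}[-\tilde f({\mathbf{x}}_1,{\mathbf{y}}_1,{\mathbf{z}}_2)])\le\epsilon$, and $\max_{{\mathbf{z}}_2}\tilde f({\mathbf{x}}_1,{\mathbf{y}}_1,{\mathbf{z}}_2)-\min_{{\mathbf{z}}_1}\tilde f({\mathbf{x}}_1,{\mathbf{z}}_1,{\mathbf{y}}_2)\le\epsilon$. $\epsilon$-KKT point of the constrained bilevel problem: $({\mathbf{x}}_1,{\mathbf{y}}_1)$ such that there exist ${\mathbf{z}}_1\in\mathcal Y_1$, $\rho\ge0$, ${\bm\lambda},\bar{\bm\lambda}\in\mathbb R_+^l$ with $\mathrm{dist}(0,\partial_{({\mathbf{x}}_1,{\mathbf{y}}_1)}[f({\mathbf{x}}_1,{\mathbf{y}}_1)+\rho(\bar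 f({\mathbf{x}}_1,{\mathbf{y}}_1)-\bar f({\mathbf{x}}_1,{\mathbf{z}}_1)-\bar{\bm\lambda}^\top\bar{{\mathbf{g}}}({\mathbf{x}}_1,{\mathbf{z}}_1))+{\bm\lambda}^\top\bar{{\mathbf{g}}}({\mathbf{x}}_1,{\mathbf{y}}_1)])\le\epsilon$, $\mathrm{dist}(0,\rho\partial_{{\mathbf{z}}_1}[\bar f({\mathbf{x}}_1,{\mathbf{z}}_1)+\bar{\bm\lambda}^\top\bar{{\mathbf{g}}}({\mathbf{x}}_1,{\mathbf{z}}_1)])\le\epsilon$, $\|[\bar{{\mathbf{g}}}({\mathbf{x}}_1,{\mathbf{z}}_1)]_+\|\le\epsilon$, $|\bar{\bm\lambda}^\top\bar{{\mathbf{g}}}({\mathbf{x}}_1,{\mathbf{z}}_1)|\le\epsilon$, $\bar f({\mathbf{x}}_1,{\mathbf{y}}_1)-\bar f^*({\mathbf{x}}_1)\le\epsilon$, $\|[\bar{{\mathbf{g}}}({\mathbf{x}}_1,{\mathbf{y}}_1)]_+\|\le\epsilon$, $|{\bm\lambda}^\top\bar{{\mathbf{g}}}({\mathbf{x}}_1,{\mathbf{y}}_1)|\le\epsilon$, where $\bar f^*({\mathbf{x}}_1)=\min_{{\mathbf{y}}_1}\{\bar f({\mathbf{x}}_1,{\mathbf{y}}_1):\bar{{\mathbf{g}}}({\mathbf{x}}_1,{\mathbf{y}}_1)\le0\}$ and $[\cdot]_+=\max\{\cdot,0\}$ componentwise. $O(\epsilon)$ denotes a quantity at most a constant independent of $\epsilon$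 times $\epsilon$. *)

(* Defs.v *)
From HB Require Import structures.
From mathcomp Require Import all_boot all_order all_algebra.
From mathcomp Require Import all_classical all_reals all_analysis.
Set Implicit Arguments. Unset Strict Implicit. Unset Printing Implicit Defensive.
Import Order.TTheory GRing.Theory Num.Theory.
Local Open Scope classical_set_scope.
Local Open Scope ring_scope.

Section Defs.
Variable R : realType.

Definition vdot k (u v : 'rV[R]_k) : R := \sum_(i < k) u ord0 i * v ord0 i.
Definition vnorm k (u : 'rV[R]_k) : R := Num.sqrt (vdot u u).

Definition pos_part k (v : 'rV[R]_k) : 'rV[R]_k := \row_i Num.max (v ord0 i) 0.

Definition dom k (h : 'rV[R]_k -> \bar R) : set 'rV[R]_k :=
  [set x | (h x < +oo)%E].

Definition proper_fun k (h : 'rV[R]_k -> \bar R) : Prop :=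
  (forall x, h x <> -oo%E) /\ exists x, h x \is a fin_num.

(* closed = lower semicontinuous *)
Definition lsc_fun k (h : 'rV[R]_k -> \bar R) : Prop :=
  forall x (a : R), (a%:E < h x)%E ->
    exists2 d : R, 0 < d & forall y, vnorm (y - x) < d -> (a%:E < h y)%E.

Definition convex_fun k (h : 'rV[R]_k -> \bar R) : Prop :=
  forall (x y : 'rV[R]_k) (t : R), 0 < t < 1 ->
    (h (t *: x + (1 - t) *: y)%R <= t%:E * h x + (1 - t)%:E * h y)%E.

Definition is_gradient k (h : 'rV[R]_k -> R) (w gr : 'rV[R]_k) : Prop :=
  forall e : R, 0 < e -> exists2 d : R, 0 < d & forall w', vnorm (w' - w) < d ->
    `|h w' - h w - vdot gr (w' - w)| <= e * vnorm (w' - w).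

Definition smooth_on k (h : 'rV[R]_k -> R) (S : set 'rV[R]_k) (L : R) : Prop :=
  exists grad : 'rV[R]_k -> 'rV[R]_k,
    (forall w, S w -> is_gradient h w (grad w)) /\
    (forall w w', S w -> S w' -> vnorm (grad w - grad w') <= L * vnorm (w - w')).

(* Frechet differentiability of a vector map with Jacobian J at w
   (row-vector convention: g w' ~ g w + (w' - w) *m J) *)
Definition is_jacobian k p (g : 'rV[R]_k -> 'rV[R]_p) (w : 'rV[R]_k)
    (J : 'M[R]_(k, p)) : Prop :=
  forall e : R, 0 < e -> exists2 d : R, 0 < d & forall w', vnorm (w' - w) < d ->
    vnorm (g w' - g w - (w' - w) *m J) <= e * vnorm (w' - w).

Definition vsmooth_on k p (g : 'rV[R]_k -> 'rV[R]_p) (S : set 'rV[R]_k) (L : R) :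
    Prop :=
  exists J : 'rV[R]_k -> 'M[R]_(k, p),
    (forall w, S w -> is_jacobian g w (J w)) /\
    (forall w w', S w -> S w' -> forall u : 'rV[R]_k,
       vnorm (u *m (J w - J w')) <= L * vnorm (w - w') * vnorm u).

Definition vlipschitz_on k p (g : 'rV[R]_k -> 'rV[R]_p) (S : set 'rV[R]_k) (L : R) :
    Prop :=
  forall w w', S w -> S w' -> vnorm (g w - g w') <= L * vnorm (w - w').

Definition elipschitz_on k (h : 'rV[R]_k -> \bar R) (S : set 'rV[R]_k) (L : R) :
    Prop :=
  forall w w', S w -> S w' -> (`|h w - h w'| <= (L * vnorm (w - w'))%:E)%E.

Definition prod_set n m (X : set 'rV[R]_n) (Y : set 'rV[R]_m) : set 'rV[R]_(n + m) :=
  [set w | X (lsubmx w) /\ Y (rsubmx w)].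

Definition uncurry2 n m T (h : 'rV[R]_n -> 'rV[R]_m -> T) : 'rV[R]_(n + m) -> T :=
  fun w => h (lsubmx w) (rsubmx w).

Definition diam k (S : set 'rV[R]_k) : R :=
  sup [set r | exists y y', S y /\ S y' /\ r = vnorm (y - y')].

Definition box l (B : R) (z : 'rV[R]_l) : Prop := forall i, 0 <= z ord0 i <= B.
Definition ind_box l (B : R) (z : 'rV[R]_l) : \bar R :=
  if `[< box B z >] then 0%E else +oo%E.

Definition frechet_sub k (h : 'rV[R]_k -> \bar R) (x : 'rV[R]_k) (v : 'rV[R]_k) : Prop :=
  h x \is a fin_num /\
  forall e : R, 0 < e -> exists2 d : R, 0 < d & forall y, vnorm (y - x) < d ->
    ((fine (h x) + vdot v (y - x) - e * vnorm (y - x))%:E <= h y)%E.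

Definition scale_set k (rho : R) (S : set 'rV[R]_k) : set 'rV[R]_k :=
  [set w | exists2 v, S v & w = rho *: v].

(* dist(0, S) <= e  (dist = infimum of norms; +oo for the empty set) *)
Definition dist0_le k (S : set 'rV[R]_k) (e : R) : Prop :=
  forall d : R, 0 < d -> exists2 v, S v & vnorm v <= e + d.

Definition blk1 n m l (w : 'rV[R]_(n + (m + l))) : 'rV[R]_n := lsubmx w.
Definition blk2 n m l (w : 'rV[R]_(n + (m + l))) : 'rV[R]_m := lsubmx (rsubmx w).
Definition blk3 n m l (w : 'rV[R]_(n + (m + l))) : 'rV[R]_l := rsubmx (rsubmx w).

Section Problem.
Variables (n m l : nat).
Variables (f1 fb1 : 'rV[R]_n -> 'rV[R]_m -> R) (f2 : 'rV[R]_n -> \bar R)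
  (fb2 : 'rV[R]_m -> \bar R) (gb : 'rV[R]_n -> 'rV[R]_m -> 'rV[R]_l).

Definition fobj (x : 'rV[R]_n) (y : 'rV[R]_m) : \bar R := ((f1 x y)%:E + f2 x)%E.
Definition fbar (x : 'rV[R]_n) (y : 'rV[R]_m) : \bar R := ((fb1 x y)%:E + fb2 y)%E.

Definition ftilde (B : R) (x : 'rV[R]_n) (z1 : 'rV[R]_m) (z2 : 'rV[R]_l) : \bar R :=
  (fbar x z1 + (vdot z2 (gb x z1))%:E - ind_box B z2)%E.

Definition ref_kkt (B eps rho : R) (x : 'rV[R]_n) (y1 : 'rV[R]_m) (y2 : 'rV[R]_l)
    (z1 : 'rV[R]_m) (z2 : 'rV[R]_l) : Prop :=
  [/\ 0 <= rho,
      dist0_le (frechet_sub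
        (fun w : 'rV[R]_(n + (m + l)) =>
           (fobj (blk1 w) (blk2 w)
            + rho%:E * (ftilde B (blk1 w) (blk2 w) z2 - ftilde B (blk1 w) z1 (blk3 w)))%E)
        (row_mx x (row_mx y1 y2))) eps,
      dist0_le (scale_set rho (frechet_sub (fun z => ftilde B x z y2) z1)) eps,
      dist0_le (scale_set rho (frechet_sub (fun z => - ftilde B x y1 z)%E z2)) eps &
      (ereal_sup [set ftilde B x y1 z | z in setT]
        - ereal_inf [set ftilde B x z y2 | z in setT] <= eps%:E)%E].

Definition fbar_star (x : 'rV[R]_n) : \bar R :=
  ereal_inf [set fbar x y | y in [set y | forall i, gb x y ord0 i <= 0]].

Definition bilevel_kkt (eps : R) (x : 'rV[R]_n) (y1 : 'rV[R]_m) : Prop :=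
  exists z1 : 'rV[R]_m, exists rho : R, exists lam : 'rV[R]_l, exists lamb : 'rV[R]_l,
  [/\ dom fb2 z1, 0 <= rho, (forall i, 0 <= lam ord0 i), (forall i, 0 <= lamb ord0 i) &
  dist0_le (frechet_sub
        (fun w : 'rV[R]_(n + m) =>
           (fobj (lsubmx w) (rsubmx w)
            + rho%:E * (fbar (lsubmx w) (rsubmx w) - fbar (lsubmx w) z1
                        - (vdot lamb (gb (lsubmx w) z1))%:E)
            + (vdot lam (gb (lsubmx w) (rsubmx w)))%:E)%E)
        (row_mx x y1)) eps /\
      dist0_le (scale_set rho
        (frechet_sub (fun z => (fbar x z + (vdot lamb (gb x z))%:E)%E) z1)) eps /\
      vnorm (pos_part (gb x z1)) <= eps /\
      `|vdot lamb (gb x z1)| <= eps /\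
      (fbar x y1 - fbar_star x <= eps%:E)%E /\
      vnorm (pos_part (gb x y1)) <= eps /\
      `|vdot lam (gb x y1)| <= eps].

End Problem.
End Defs.

(* Main.v *)
Require Import Defs.
From HB Require Import structures.
From mathcomp Require Import all_boot all_order all_algebra.
From mathcomp Require Import all_classical all_reals all_analysis.
From mathcomp Require Import lra ring.
Import Order.TTheory GRing.Theory Num.Theory.
Import numFieldNormedType.Exports.
Local Open Scope classical_set_scope.
Local Open Scope ring_scope.
Set Implicit Arguments. Unset Strict Implicit. Unset Printing Implicit Defensive.

Section Aux.
Variable R : realType.

Lemma vdot_ge0 k (u : 'rV[R]_k) : 0 <= vdot u u.
Proof. by rewrite /vdot; apply: sumr_ge0 => i _; rewrite -expr2 sqr_ge0. Qed.

Lemma vnorm_ge0 k (u : 'rV[R]_k) : 0 <= vnorm u.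
Proof. exact: sqrtr_ge0. Qed.

Lemma vdot_row_mx k1 k2 (a c : 'rV[R]_k1) (b d : 'rV[R]_k2) :
  vdot (row_mx a b) (row_mx c d) = vdot a c + vdot b d.
Proof.
rewrite /vdot big_split_ord /=; congr (_ + _); apply: eq_bigr => i _.
  by rewrite !row_mxEl.
by rewrite !row_mxEr.
Qed.

Lemma vdotDl k (u v w : 'rV[R]_k) : vdot (u + v) w = vdot u w + vdot v w.
Proof. rewrite /vdot -big_split; apply: eq_bigr => i _; by rewrite mxE mulrDl. Qed.

Lemma vdotZl k (t : R) (u w : 'rV[R]_k) : vdot (t *: u) w = t * vdot u w.
Proof. rewrite /vdot mulr_sumr; apply: eq_bigr => i _; by rewrite mxE mulrA. Qed.

Lemma vdotNl k (u w : 'rV[R]_k) : vdot (- u) w = - vdot u w.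
Proof. rewrite /vdot -sumrN; apply: eq_bigr => i _; by rewrite mxE mulNr. Qed.

Lemma vdotC k (u w : 'rV[R]_k) : vdot u w = vdot w u.
Proof. rewrite /vdot; apply: eq_bigr => i _; by rewrite mulrC. Qed.

Lemma vdot0l k (w : 'rV[R]_k) : vdot 0 w = 0.
Proof. rewrite /vdot big1 // => i _; by rewrite mxE mul0r. Qed.

Lemma single_le_sum k (F : 'I_k -> R) i : (forall j, 0 <= F j) -> F i <= \sum_j F j.
Proof. move=> F0; rewrite (bigD1 i) //= lerDl; exact: sumr_ge0. Qed.

Lemma coord_le_vnorm k (u : 'rV[R]_k) i : `|u ord0 i| <= vnorm u.
Proof.
rewrite -sqrtr_sqr; apply: ler_wsqrtr; rewrite expr2 /vdot.
  rewrite (bigD1 i) //= lerDl; apply: sumr_ge0 => j _; by rewrite -expr2 sqr_ge0.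
Qed.

Lemma vnorm_le_sum k (u : 'rV[R]_k) : vnorm u <= \sum_i `|u ord0 i|.
Proof.
set S := \sum_i _.
have S0 : 0 <= S by apply: sumr_ge0.
rewrite -(ger0_norm S0) -sqrtr_sqr; apply: ler_wsqrtr.
rewrite expr2 /vdot mulr_suml; apply: ler_sum => i _.
apply: (le_trans (real_ler_norm _)); first by rewrite realE -expr2 sqr_ge0.
rewrite normrM; apply: ler_wpM2l => //.
by rewrite /S (bigD1 i) //= lerDl; apply: sumr_ge0.
Qed.

Lemma vnorm_bound k (u : 'rV[R]_k) (M : R) :
  (forall i, `|u ord0 i| <= M) -> vnorm u <= k%:R * M.
Proof.
move=> H; apply: le_trans; first exact: vnorm_le_sum.
have -> : k%:R * M = \sum_(i < k) M by rewrite sumr_const card_ord mulr_natl.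
by apply: ler_sum => i _.
Qed.

Lemma vnorm_row_mx k1 k2 (a : 'rV[R]_k1) (b : 'rV[R]_k2) :
  vnorm (row_mx a b) = Num.sqrt (vdot a a + vdot b b).
Proof. by rewrite /vnorm vdot_row_mx. Qed.

Lemma vnorm_row_mx_r k1 k2 (a : 'rV[R]_k1) (b : 'rV[R]_k2) : vnorm b <= vnorm (row_mx a b).
Proof. by rewrite vnorm_row_mx; apply: ler_wsqrtr; rewrite lerDr vdot_ge0. Qed.

Lemma vnorm_row_mx_l k1 k2 (a : 'rV[R]_k1) (b : 'rV[R]_k2) : vnorm a <= vnorm (row_mx a b).
Proof. by rewrite vnorm_row_mx; apply: ler_wsqrtr; rewrite lerDl vdot_ge0. Qed.

Lemma vnorm_row0 k1 k2 (b : 'rV[R]_k2) : vnorm (row_mx (0 : 'rV[R]_k1) b) = vnorm b.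
Proof. by rewrite vnorm_row_mx vdot0l add0r. Qed.

Lemma vnormZ k (t : R) (u : 'rV[R]_k) : vnorm (t *: u) = `|t| * vnorm u.
Proof.
rewrite /vnorm vdotZl vdotC vdotZl mulrA -expr2 sqrtrM ?sqr_ge0 //.
by rewrite sqrtr_sqr.
Qed.

Lemma vnorm_eq0 k (u : 'rV[R]_k) : vnorm u <= 0 -> u = 0.
Proof.
move=> H; apply/rowP => j; rewrite mxE; apply/eqP; rewrite -normr_le0.
apply: le_trans H; exact: coord_le_vnorm.
Qed.

Lemma entry_le_norm k (u : 'rV[R]_k) i : `|u ord0 i| <= `|u|.
Proof.
rewrite [X in _ <= X]/Num.norm /= mx_normrE.
exact: (le_bigmax _ (fun ij : 'I_1 * 'I_k => `|u ij.1 ij.2|) (ord0, i)).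
Qed.

Lemma compact_cbound k (S : set 'rV[R]_k) : compact S ->
  exists M, 0 <= M /\ forall y, S y -> forall i, `|y ord0 i| <= M.
Proof.
move=> cS; have [M0 [_ H]] := compact_bounded cS.
exists (`|M0| + 1); split; first by rewrite addr_ge0 // normr_ge0.
move=> y Sy i; apply: le_trans; first exact: entry_le_norm.
apply: (H (`|M0| + 1)) => //.
apply: (le_lt_trans (real_ler_norm _)); [exact: num_real | by rewrite ltrDl].
Qed.


Lemma vdot0r k (w : 'rV[R]_k) : vdot w 0 = 0.
Proof. by rewrite vdotC vdot0l. Qed.

Lemma frechet_dir k (h : 'rV[R]_k -> \bar R) (p v u : 'rV[R]_k) (a t0 : R) :
  frechet_sub h p v -> 0 < t0 ->
  (forall t, 0 < t -> t <= t0 -> (h (p + t *: u)%R <= (fine (h p) + t * a)%:E)%E) ->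
  vdot v u <= a.
Proof.
move=> [hf Hf] t00 Hh.
apply/ler_addgt0Pr => e e0.
set c := vnorm u + 1.
have u0 := vnorm_ge0 u.
have c0 : 0 < c by rewrite /c; lra.
have [d d0 Hd] := Hf (e / c) (divr_gt0 e0 c0).
set t := Num.min t0 (d / (2 * c)).
have tp : 0 < t by rewrite lt_min t00 divr_gt0 // mulr_gt0.
have tle : t <= t0 by rewrite ge_min lexx.
have tle2 : t <= d / (2 * c) by rewrite ge_min lexx orbT.
have Ep : p + t *: u - p = t *: u by rewrite addrC addKr.
have Hn : vnorm (p + t *: u - p) < d.
  rewrite Ep vnormZ gtr0_norm //.
  have h1 : t * vnorm u <= d / (2 * c) * c.
    apply: ler_pM => //; first exact: ltW. rewrite /c; lra.
  have h2 : d / (2 * c) * c = d / 2.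
    rewrite invfM mulrAC -mulrA; congr (_ * _); rewrite mulrCA divff ?mulr1 //; by rewrite gt_eqF. 
  lra.
have H1 := Hd _ Hn.
have H2 := Hh t tp tle.
have := le_trans H1 H2; rewrite lee_fin Ep vnormZ gtr0_norm // vdotC vdotZl vdotC.
move=> H3.
have H4 : t * (vdot v u - a - e / c * vnorm u) <= 0.
  by rewrite !mulrBr; rewrite mulrCA; lra.
have H5 : vdot v u - a - e / c * vnorm u <= 0.
  by rewrite -(pmulr_rle0 _ tp).
have H6 : e / c * vnorm u <= e.
  rewrite mulrAC ler_pdivrMr //; apply: ler_wpM2l; [exact: ltW | rewrite /c; lra].
lra.
Qed.

Lemma frechet_restrict n1 n2 n3 (F : 'rV[R]_(n1 + (n2 + n3)) -> \bar R)
    (Gf : 'rV[R]_(n1 + n2) -> \bar R) x y c v :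
  (forall w, Gf w = F (row_mx (lsubmx w) (row_mx (rsubmx w) c))) ->
  frechet_sub F (row_mx x (row_mx y c)) v ->
  frechet_sub Gf (row_mx x y) (row_mx (lsubmx v) (lsubmx (rsubmx v))).
Proof.
move=> HG [Ff HF].
have HP : Gf (row_mx x y) = F (row_mx x (row_mx y c)) by rewrite HG row_mxKl row_mxKr.
split; first by rewrite HP.
move=> e e0; have [d d0 Hd] := HF e e0; exists d => // w Hw.
have EW : row_mx (lsubmx w) (row_mx (rsubmx w) c) - row_mx x (row_mx y c)
    = row_mx (lsubmx w - x) (row_mx (rsubmx w - y) 0).
  by rewrite opp_row_mx add_row_mx opp_row_mx add_row_mx subrr.
have Ew : w - row_mx x y = row_mx (lsubmx w - x) (rsubmx w - y).
  by rewrite -{1}(hsubmxK w) opp_row_mx add_row_mx.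
have Nn : vnorm (row_mx (lsubmx w) (row_mx (rsubmx w) c) - row_mx x (row_mx y c))
    = vnorm (w - row_mx x y).
  by rewrite EW Ew !vnorm_row_mx vdot_row_mx vdot0l addr0.
have Ev : vdot v (row_mx (lsubmx w) (row_mx (rsubmx w) c) - row_mx x (row_mx y c))
    = vdot (row_mx (lsubmx v) (lsubmx (rsubmx v))) (w - row_mx x y).
  by rewrite EW Ew -{1}[v]hsubmxK -{1}[rsubmx v]hsubmxK !vdot_row_mx vdot0r addr0.
have := Hd (row_mx (lsubmx w) (row_mx (rsubmx w) c)) ltac:(by rewrite Nn).
by rewrite HP HG Ev Nn.
Qed.


Definition ei k (i : 'I_k) : 'rV[R]_k := \row_j (j == i)%:R.

Lemma vdot_ei k (w : 'rV[R]_k) i : vdot w (ei i) = w ord0 i.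
Proof.
rewrite /vdot (bigD1 i) //= big1 ?addr0; first by rewrite mxE eqxx mulr1.
by move=> j /negbTE ji; rewrite mxE ji mulr0.
Qed.

Lemma ei_entry k (y : 'rV[R]_k) (s : R) i j :
  (y + s *: ei i) ord0 j = y ord0 j + (if j == i then s else 0).
Proof. by rewrite !mxE; case: eqP => _; rewrite ?mulr1 ?mulr0. Qed.

Lemma vdot_upd k (y w : 'rV[R]_k) (s : R) i :
  vdot (y + s *: ei i) w = vdot y w + s * w ord0 i.
Proof. by rewrite vdotDl vdotZl [vdot (ei i) w]vdotC vdot_ei. Qed.

Lemma box_upd l (B : R) (y : 'rV[R]_l) (s : R) i :
  box B y -> 0 <= y ord0 i + s <= B -> box B (y + s *: ei i).
Proof.
move=> By Hi j; rewrite ei_entry; case: eqP => [->//|_]; by rewrite addr0.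
Qed.

Lemma vnorm_rowD k1 k2 (a : 'rV[R]_k1) (b : 'rV[R]_k2) :
  vnorm (row_mx a b) <= vnorm a + vnorm b.
Proof.
have a0 := vnorm_ge0 a; have b0 := vnorm_ge0 b.
rewrite -(ger0_norm (addr_ge0 a0 b0)) -sqrtr_sqr vnorm_row_mx; apply: ler_wsqrtr.
rewrite sqrrD /vnorm !sqr_sqrtr ?vdot_ge0 //.
have : 0 <= Num.sqrt (vdot a a) * Num.sqrt (vdot b b) *+ 2.
  by rewrite mulrn_wge0 // mulr_ge0 // sqrtr_ge0.
lra.
Qed.

Lemma vnorm_restr k1 k2 k3 (V : 'rV[R]_(k1 + (k2 + k3))) :
  vnorm (row_mx (lsubmx V) (lsubmx (rsubmx V))) <= vnorm V.
Proof.
have E : V = row_mx (lsubmx V) (row_mx (lsubmx (rsubmx V)) (rsubmx (rsubmx V))).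
  by rewrite !hsubmxK.
rewrite [in X in _ <= X]E !vnorm_row_mx vdot_row_mx; apply: ler_wsqrtr.
by rewrite lerD2l lerDl vdot_ge0.
Qed.

Lemma vnorm_blk3 k1 k2 k3 (V : 'rV[R]_(k1 + (k2 + k3))) :
  vnorm (rsubmx (rsubmx V)) <= vnorm V.
Proof.
have E : V = row_mx (lsubmx V) (row_mx (lsubmx (rsubmx V)) (rsubmx (rsubmx V))).
  by rewrite !hsubmxK.
rewrite [in X in _ <= X]E.
apply: le_trans (vnorm_row_mx_r _ _); exact: vnorm_row_mx_r.
Qed.

Lemma vnorm_pos_bound k (u : 'rV[R]_k) (M : R) :
  0 <= M -> (forall i, u ord0 i <= M) -> vnorm (pos_part u) <= k%:R * M.
Proof.
move=> M0 H; apply: vnorm_bound => i; rewrite mxE ger0_norm.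
  by rewrite ge_max H M0.
by rewrite le_max lexx orbT.
Qed.

Lemma vdot_bound k (a b : 'rV[R]_k) (M : R) :
  (forall i, `|a ord0 i * b ord0 i| <= M) -> `|vdot a b| <= k%:R * M.
Proof.
move=> H; apply: le_trans; first exact: ler_norm_sum.
have -> : k%:R * M = \sum_(i < k) M by rewrite sumr_const card_ord mulr_natl.
by apply: ler_sum => i _.
Qed.

Lemma dist0_mono k (S : set 'rV[R]_k) e e' : dist0_le S e -> e <= e' -> dist0_le S e'.
Proof.
move=> H ee d d0; have [v Sv Hv] := H d d0; exists v => //.
by apply: le_trans Hv _; rewrite lerD2r.
Qed.

Lemma domE k (h : 'rV[R]_k -> \bar R) y :
  (forall y, h y <> -oo%E) -> dom h y -> h y = (fine (h y))%:E.
Proof.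
move=> hN; rewrite /dom /=; move: (hN y); case: (h y) => //.
Qed.

Lemma vnorm0 k : vnorm (0 : 'rV[R]_k) = 0.
Proof. by rewrite /vnorm vdot0l sqrtr0. Qed.

Lemma eqle (x y : R) : x = y -> x <= y.
Proof. by move->. Qed.

Lemma aux_g0 (B y g e : R) : 0 < B -> y <= B * 3 / 4 -> (B - y) * g <= e -> 0 < e ->
  g * B <= 4 * e.
Proof. move=> *; case: (leP g 0) => hg; nra. Qed.

Lemma aux_q4 (rho z B g s e : R) : 0 < rho -> 0 <= z -> z <= B -> 0 < B ->
  `|g| <= `|s| + 4 * e / B -> rho * `|s| <= 2 * e -> `|rho * z * g| <= 2 * B * e + 4 * rho * e.
Proof.
move=> r0 z0 zB B0 hg hs.
rewrite !normrM (ger0_norm (ltW r0)) (ger0_norm z0).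
apply: le_trans (_ : rho * (B * `|g|) <= _).
  rewrite -mulrA ler_pM2l //; exact: (ler_wpM2r (normr_ge0 _) zB).
apply: le_trans (_ : rho * (B * (`|s| + 4 * e / B)) <= _).
  by rewrite ler_pM2l // ler_pM2l.
have -> : rho * (B * (`|s| + 4 * e / B)) = B * (rho * `|s|) + 4 * rho * e.
  by field; rewrite gt_eqF.
have : B * (rho * `|s|) <= B * (2 * e) by rewrite ler_pM2l.
lra.
Qed.

End Aux.
Arguments ei {R k}.

Theorem lemma5p4 (R : realType) (n m l : nat)
    (f1 fb1 : 'rV[R]_n -> 'rV[R]_m -> R) (f2 : 'rV[R]_n -> \bar R)
    (fb2 : 'rV[R]_m -> \bar R) (gb : 'rV[R]_n -> 'rV[R]_m -> 'rV[R]_l)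
    (Lf1 Lfb1 Lfb Lgg Lg G : R) :
  (* f2, fb2 proper closed convex; X1 = dom f2, Y1 = dom fb2 compact *)
  proper_fun f2 -> lsc_fun f2 -> convex_fun f2 ->
  proper_fun fb2 -> lsc_fun fb2 -> convex_fun fb2 ->
  compact (dom f2) -> compact (dom fb2) ->
  (* f1 is Lf1-smooth on X1 x Y1 *)
  smooth_on (uncurry2 f1) (prod_set (dom f2) (dom fb2)) Lf1 ->
  (* fb1 convex in y1 and Lfb1-smooth *)
  (forall x, dom f2 x -> convex_fun (fun y => (fb1 x y)%:E)) ->
  smooth_on (uncurry2 fb1) (prod_set (dom f2) (dom fb2)) Lfb1 ->
  (* fbar is Lfb-Lipschitz on X1 x Y1 *)
  elipschitz_on (uncurry2 (fbar fb1 fb2)) (prod_set (dom f2) (dom fb2)) Lfb ->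
  (* each gbar_i convex in y1; gbar Lgg-smooth and Lg-Lipschitz *)
  (forall (i : 'I_l) x, dom f2 x -> convex_fun (fun y => (gb x y ord0 i)%:E)) ->
  vsmooth_on (uncurry2 gb) (prod_set (dom f2) (dom fb2)) Lgg ->
  vlipschitz_on (uncurry2 gb) (prod_set (dom f2) (dom fb2)) Lg ->
  (* Slater condition *)
  0 < G ->
  (forall x, dom f2 x -> exists2 yh, dom fb2 yh & forall i, gb x yh ord0 i <= - G) ->
  let B := 2 * Lfb * diam (dom fb2) / G in
  forall rho : R, 0 <= rho ->
  exists C : R,
  forall (eps : R) (x : 'rV[R]_n) (y1 : 'rV[R]_m) (y2 : 'rV[R]_l)
         (z1 : 'rV[R]_m) (z2 : 'rV[R]_l),
    0 < eps ->
    dom f2 x -> dom fb2 y1 -> box B y2 ->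
    eps <= Num.min (rho * Lfb / 4) (rho * G * Num.sqrt l%:R / 4) ->
    ref_kkt f1 fb1 f2 fb2 gb B eps rho x y1 y2 z1 z2 ->
    bilevel_kkt f1 fb1 f2 fb2 gb (C * eps) x y1.

Proof.
move=> [f2N [xa xaf]] _ _ [fb2N [ya yaf]] _ _ cX cY _ _ _ Lip _ _ gLip G0 Slater B rho rho0.
have Xa : dom f2 xa by rewrite /dom /=; move: xaf; case: (f2 xa) => //= r _; exact: ltry.
have Ya : dom fb2 ya by rewrite /dom /=; move: yaf; case: (fb2 ya) => //= r _; exact: ltry.
have Hprod : forall x y, dom f2 x -> dom fb2 y -> prod_set (dom f2) (dom fb2) (row_mx x y).
  by move=> x y hx hy; rewrite /prod_set /= row_mxKl row_mxKr.
pose fbr x y := fb1 x y + fine (fb2 y).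
have fbarE : forall x y, dom fb2 y -> fbar fb1 fb2 x y = (fbr x y)%:E.
  by move=> x y Hy; rewrite /fbar {1}(domE fb2N Hy).
have [MX [MX0 HMX]] := compact_cbound cX.
have [MY [MY0 HMY]] := compact_cbound cY.
pose Kxy := n%:R * (MX + MX) + m%:R * (MY + MY).
have HK : forall x y, dom f2 x -> dom fb2 y -> vnorm (row_mx x y - row_mx xa ya) <= Kxy.
  move=> x y Hx Hy; rewrite opp_row_mx add_row_mx.
  apply: le_trans; first exact: vnorm_rowD.
  apply: lerD; apply: vnorm_bound => i; rewrite !mxE;
    (apply: le_trans; first exact: ler_normB); apply: lerD; rewrite ?mxE; by [apply: HMX|apply: HMY].
pose Mg := `|Lg| * Kxy + vnorm (gb xa ya).
have HMg : forall x y i, dom f2 x -> dom fb2 y -> `|gb x y ord0 i| <= Mg.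
  move=> x y i Hx Hy.
  have -> : gb x y ord0 i = (gb x y - gb xa ya) ord0 i + gb xa ya ord0 i.
    by rewrite !mxE subrK.
  apply: le_trans; first exact: ler_normD.
  apply: lerD; last exact: coord_le_vnorm.
  apply: le_trans; first exact: coord_le_vnorm.
  have := gLip (row_mx x y) (row_mx xa ya).
  rewrite /uncurry2 !row_mxKl !row_mxKr => H.
  have {}H := H (Hprod _ _ Hx Hy) (Hprod _ _ Xa Ya).
  apply: le_trans H _.
  apply: le_trans (_ : `|Lg| * vnorm (row_mx x y - row_mx xa ya) <= _).
    by apply: ler_wpM2r; [exact: vnorm_ge0 | exact: ler_norm].
  by apply: ler_wpM2l; [exact: normr_ge0 | exact: HK].
have Mg0 : 0 <= Mg.
  by rewrite /Mg addr_ge0 ?vnorm_ge0 // mulr_ge0 // /Kxy addr_ge0 // mulr_ge0 // addr_ge0.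
clearbody Mg.
pose D := diam (dom fb2).
have HD : forall y y', dom fb2 y -> dom fb2 y' -> vnorm (y - y') <= D.
  move=> y y' Hy Hy'; apply: ub_le_sup; last by exists y, y'.
  exists (m%:R * (MY + MY)) => r [a [b [Ha [Hb ->]]]].
  apply: vnorm_bound => i; rewrite !mxE.
  apply: le_trans; first exact: ler_normB.
  by apply: lerD; [apply: HMY|apply: HMY].
have D0 : 0 <= D by apply: le_trans (HD ya ya Ya Ya); exact: vnorm_ge0.
have GB : G * B = 2 * Lfb * D by rewrite /B /D mulrC divfK // gt_eqF.
clearbody B D.
pose K1 := 2 * l%:R / rho.
pose K2 := l%:R * B * 2 / rho.
pose K3 := l%:R * 4 / B.
pose K4 := l%:R * (2 * B + 4 * rho).
pose KB := l%:R * Mg * (2 + B + rho * B) * (2 / (Lfb * D)).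
exists (1 + K1 + K2 + K3 + K4 + KB).
move=> eps x y1 y2 z1 z2 eps0 Xx Yy1 By2 epsle [_ Hd2 Hd3 Hd4 Hgap].
have epsL : eps <= rho * Lfb / 4 by apply: le_trans epsle _; rewrite ge_min lexx.
have rLf : 0 < rho * Lfb.
  move: (rho * Lfb) epsL eps0 => p h1 h2; lra.
have rho_pos : 0 < rho.
  rewrite lt_neqAle rho0 andbT; apply/eqP => h; move: rLf; by rewrite -h mul0r ltxx.
have Lfb_pos : 0 < Lfb by rewrite -(pmulr_rgt0 _ rho_pos).
have B0 : 0 <= B by rewrite -(pmulr_rge0 _ G0) GB !mulr_ge0 // ltW.
have ind0 : forall z : 'rV[R]_l, box B z -> ind_box B z = 0%E.
  by move=> z bz; rewrite /ind_box asboolT.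
have indoo : forall z : 'rV[R]_l, ~ box B z -> ind_box B z = +oo%E by move=> z bz; rewrite /ind_box asboolF.
have Hf2x : f2 x = (fine (f2 x))%:E := domE f2N Xx.
have [V HV nV] := Hd2 eps eps0.
have [w1 [s1 Hs1 Ew1] nw1] := Hd3 eps eps0.
have [w2 [s2 Hs2 Ew2] nw2] := Hd4 eps eps0.
subst w1 w2.
have Yz1 : dom fb2 z1.
  move: Hs1 => [+ _]; rewrite /ftilde /fbar ind0 // sube0 /dom /=.
  by case: (fb2 z1) (fb2N z1) => //= r _ _; exact: ltry.
have Bz2 : box B z2.
  move: Hs2 => [+ _]; apply: contraTP => nb.
  by rewrite /ftilde fbarE // indoo.
have box0 : box B (0 : 'rV[R]_l) by move=> i; rewrite mxE lexx B0.
have Hgap' : forall (z : 'rV[R]_l) (z' : 'rV[R]_m), box B z -> dom fb2 z' ->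
    fbr x y1 + vdot z (gb x y1) - (fbr x z' + vdot y2 (gb x z')) <= eps.
  move=> z z' bz Hz'; rewrite -lee_fin EFinB.
  apply: le_trans Hgap; apply: leeB.
    apply: ereal_sup_ubound; exists z => //.
    by rewrite /ftilde fbarE // ind0 // sube0.
  apply: ereal_inf_lbound; exists z' => //.
  by rewrite /ftilde fbarE // ind0 // sube0.
have [yh Yyh Hyh] := Slater x Xx.
have Lipy : forall y y', dom fb2 y -> dom fb2 y' -> fbr x y - fbr x y' <= Lfb * D.
  move=> y y' Hy Hy'.
  have := Lip (row_mx x y) (row_mx x y') (Hprod _ _ Xx Hy) (Hprod _ _ Xx Hy').
  rewrite /uncurry2 !row_mxKl !row_mxKr !fbarE // -EFinB abse_EFin lee_fin.
  rewrite opp_row_mx add_row_mx subrr vnorm_row0 => H.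
  apply: le_trans; first exact: ler_norm.
  apply: le_trans H _; apply: ler_wpM2l; [exact: ltW | exact: HD].
have Hy2G : forall i, G * y2 ord0 i <= eps + Lfb * D.
  move=> i; have := Hgap' 0 yh box0 Yyh; rewrite vdot0l addr0.
  have Hs : vdot y2 (gb x yh) <= - (G * y2 ord0 i).
    rewrite /vdot (bigD1 i) //= -[X in _ <= X]addr0; apply: lerD.
      rewrite -mulNr [_ * y2 ord0 i]mulrC.
      by apply: ler_wpM2l; [case/andP: (By2 i) | exact: Hyh].
    apply: sumr_le0 => j _; apply: mulr_ge0_le0; first by case/andP: (By2 j).
    apply: le_trans (Hyh j) _; rewrite oppr_le0; exact: ltW.
  have := Lipy yh y1 Yyh Yy1.
  move: Hs; set a := vdot _ _; set b := G * _; set c := Lfb * D; lra.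
have LD0 : 0 <= Lfb * D by rewrite mulr_ge0 // ltW.
have K10 : 0 <= K1 by rewrite /K1 divr_ge0 ?mulr_ge0 ?ler0n.
have K20 : 0 <= K2 by rewrite /K2 divr_ge0 ?mulr_ge0 ?ler0n.
have K30 : 0 <= K3 by rewrite /K3 divr_ge0 ?mulr_ge0 ?ler0n.
have K40 : 0 <= K4 by rewrite /K4 mulr_ge0 ?addr_ge0 ?mulr_ge0 ?ler0n.
have KB0 : 0 <= KB.
  rewrite /KB mulr_ge0 ?divr_ge0 //.
  by rewrite mulr_ge0 ?addr_ge0 ?mulr_ge0 ?ler0n.
set C := 1 + K1 + K2 + K3 + K4 + KB.
have Ce : forall K, 0 <= K -> K <= C -> K * eps <= C * eps.
  by move=> K _ KC; apply: ler_wpM2r => //; exact: ltW.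
have C1 : eps <= C * eps by rewrite -[X in X <= _]mul1r; apply: Ce => //; rewrite /C; lra.
have Ceps0 : 0 <= C * eps by apply: le_trans C1; exact: ltW.
exists z1, rho, (rho *: z2), y2; split => //.
- by move=> i; rewrite mxE mulr_ge0 //; case/andP: (Bz2 i).
- by move=> i; case/andP: (By2 i).
split.
  move=> d d0; have [V' HV' nV'] := Hd2 d d0.
  exists (row_mx (lsubmx V') (lsubmx (rsubmx V'))); last first.
    apply: le_trans; first exact: vnorm_restr.
    by apply: le_trans nV' _; rewrite lerD2r.
  apply: frechet_restrict HV' => w.
  rewrite /blk1 /blk2 /blk3 !row_mxKr !row_mxKl.
  move: (lsubmx w) (rsubmx w) => x' y'.
  rewrite /ftilde !ind0 // !sube0 (fbarE x' z1 Yz1) vdotZl.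
  have hfo : fobj f1 f2 x' y' != -oo%E.
    by rewrite /fobj; case: (f2 x') (f2N x').
  rewrite /fbar; case E: (fb2 y') => [r| |]; last by have := fb2N y'; rewrite E.
    do 8?(first [rewrite -EFinD | rewrite -EFinB | rewrite -EFinM]).
    rewrite -addeA -EFinD; congr (_ + EFin _); ring.
  have rE : (0 < rho%:E)%E by rewrite lte_fin.
  rewrite addey // -!EFinN !addye // gt0_muley // addey // addye //.
split.
  apply: dist0_mono C1.
  have -> : (fun z => fbar fb1 fb2 x z + (vdot y2 (gb x z))%:E)%E = (ftilde fb1 fb2 gb B x)^~ y2.
    by apply/funext => z; rewrite /ftilde ind0 // sube0.
  exact: Hd3.
have [Q1 [Q2 [Q3 Q4]]] : vnorm (pos_part (gb x z1)) <= C * eps /\ `|vdot y2 (gb x z1)| <= C * eps /\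
    vnorm (pos_part (gb x y1)) <= C * eps /\ `|vdot (rho *: z2) (gb x y1)| <= C * eps.
  move: D0; rewrite le_eqVlt => /orP [/eqP D0'|Dpos].
    have Eq : forall y, dom fb2 y -> y = yh.
      move=> y Hy; apply/subr0_eq/vnorm_eq0; rewrite D0'; exact: HD.
    have B_0 : B = 0.
      have : G * B = 0 by rewrite GB -D0' mulr0.
      by move/eqP; rewrite mulf_eq0 gt_eqF //= => /eqP.
    have row0 : forall z : 'rV[R]_l, box B z -> z = 0.
      move=> z bz; apply/rowP => i; rewrite mxE; apply/le_anti.
      by have /andP[h1 h2] := bz i; rewrite h1 -B_0 h2.
    have pos0 : forall y, dom fb2 y -> vnorm (pos_part (gb x y)) <= C * eps.
      move=> y Hy; rewrite (Eq y Hy); apply: le_trans.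
        apply: (vnorm_pos_bound (M := 0)) => // i.
        apply: le_trans (Hyh i) _; rewrite oppr_le0; exact: ltW.
      by rewrite mulr0.
    split; first exact: pos0.
    split; first by rewrite (row0 _ By2) vdot0l normr0.
    split; first exact: pos0.
    by rewrite (row0 _ Bz2) scaler0 vdot0l normr0.
  have LDp : 0 < Lfb * D by rewrite mulr_gt0.
  case: (leP eps (Lfb * D / 2)) => [cA | cB].
    have Bpos : 0 < B by rewrite -(pmulr_rgt0 _ G0) GB -mulrA mulr_gt0.
    have y2le : forall i, y2 ord0 i <= B * 3 / 4.
      move=> i; rewrite -(ler_pM2l G0).
      have -> : G * (B * 3 / 4) = (G * B) * 3 / 4 by ring.
      rewrite GB; have -> : 2 * Lfb * D * 3 / 4 = (Lfb * D) * (3 / 2) by field.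
      have := Hy2G i; move: (G * y2 ord0 i) (Lfb * D) cA => a b h1 h2; lra.
    have nV3 : forall i, `|rsubmx (rsubmx V) ord0 i| <= 2 * eps.
      move=> i; apply: le_trans; first exact: coord_le_vnorm.
      apply: le_trans; first exact: vnorm_blk3.
      by apply: le_trans nV _; lra.
    move: HV; set F := (X in frechet_sub X) => HV.
    pose Fr (Y : 'rV[R]_l) := f1 x y1 + fine (f2 x) + rho * (fbr x y1 + vdot z2 (gb x y1)
       - (fbr x z1 + vdot Y (gb x z1))).
    have Fval : forall Y, box B Y -> F (row_mx x (row_mx y1 Y)) = (Fr Y)%:E.
      move=> Y bY; rewrite /F /blk1 /blk2 /blk3 !row_mxKr !row_mxKl.
      rewrite /fobj Hf2x /ftilde !ind0 // !sube0 !fbarE //.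
      do 8?(first [rewrite -EFinD | rewrite -EFinB | rewrite -EFinM]).
    have EV : V = row_mx (lsubmx V) (row_mx (lsubmx (rsubmx V)) (rsubmx (rsubmx V))).
      by rewrite !hsubmxK.
    have Fdir : forall i (sg t0 : R), 0 < t0 ->
        (forall t, 0 < t -> t <= t0 -> box B (y2 + (t * sg) *: ei i)) ->
        sg * rsubmx (rsubmx V) ord0 i <= - (sg * (rho * gb x z1 ord0 i)).
      move=> i sg t0 t00 Hb.
      have := frechet_dir (u := row_mx 0 (row_mx 0 (sg *: ei i)))
        (a := - (sg * (rho * gb x z1 ord0 i))) HV t00.
      rewrite {1}EV !vdot_row_mx !vdot0r !add0r [vdot _ (sg *: _)]vdotC vdotZl vdotC vdot_ei.
      apply => t tp tle.
      have -> : row_mx x (row_mx y1 y2) + t *: row_mx 0 (row_mx 0 (sg *: ei i))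
          = row_mx x (row_mx y1 (y2 + (t * sg) *: ei i)).
        by rewrite !scale_row_mx !scaler0 !add_row_mx !addr0 scalerA.
      rewrite (Fval _ (Hb _ tp tle)) (Fval _ By2) /= lee_fin /Fr vdot_upd; apply: eqle; ring.
    have nV3' : forall i, - (2 * eps) <= rsubmx (rsubmx V) ord0 i <= 2 * eps.
      by move=> i; rewrite -ler_norml; exact: nV3.
    have g1up : forall i, rho * gb x z1 ord0 i <= 2 * eps.
      move=> i; have hBy : 0 < B - y2 ord0 i by have := y2le i; lra.
      have H : 1 * rsubmx (rsubmx V) ord0 i <= - (1 * (rho * gb x z1 ord0 i)).
        apply: (Fdir i 1 (B - y2 ord0 i) hBy) => t tp tle; apply: box_upd => //.
        rewrite mulr1; have /andP[h1 h2] := By2 i; apply/andP; split; lra.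
      rewrite !mul1r in H; have /andP[h1 h2] := nV3' i; lra.
    have g1lo : forall i, 0 < y2 ord0 i -> - (2 * eps) <= rho * gb x z1 ord0 i.
      move=> i hy.
      have H : (-1) * rsubmx (rsubmx V) ord0 i <= - ((-1) * (rho * gb x z1 ord0 i)).
        apply: (Fdir i (-1) (y2 ord0 i) hy) => t tp tle; apply: box_upd => //.
        rewrite mulrN1; have /andP[h1 h2] := By2 i; apply/andP; split; lra.
      rewrite !mulN1r opprK in H; have /andP[h1 h2] := nV3' i; lra.
    have g0up : forall i, gb x y1 ord0 i <= 4 * eps / B.
      move=> i; have hb : box B (y2 + (B - y2 ord0 i) *: ei i).
        apply: box_upd => //; have /andP[h1 h2] := By2 i; apply/andP; split; lra.
      have := Hgap' _ y1 hb Yy1; rewrite vdot_upd => h.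
      have h' : (B - y2 ord0 i) * gb x y1 ord0 i <= eps by lra.
      rewrite ler_pdivlMr //.
      exact: (aux_g0 Bpos (y2le i) h' eps0).
    split.
      apply: le_trans (Ce K1 K10 _); last by rewrite /C; lra.
      have -> : K1 * eps = l%:R * (2 * eps / rho) by rewrite /K1; field; rewrite gt_eqF.
      apply: vnorm_pos_bound; first by rewrite divr_ge0 ?mulr_ge0 // ltW.
      move=> i; rewrite ler_pdivlMr // mulrC; exact: g1up.
    split.
      apply: le_trans (Ce K2 K20 _); last by rewrite /C; lra.
      have -> : K2 * eps = l%:R * (B * (2 * eps / rho)) by rewrite /K2; field; rewrite gt_eqF.
      apply: vdot_bound => i; rewrite normrM.
      have /andP[h1 h2] := By2 i; rewrite (ger0_norm h1).
      move: h1; rewrite le_eqVlt => /orP [/eqP <-|hy].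
        by rewrite mul0r mulr_ge0 // divr_ge0 ?mulr_ge0 // ltW.
      apply: ler_pM => //; first exact: ltW.
      rewrite ler_pdivlMr // -[X in _ * X <= _](ger0_norm (ltW rho_pos)) -normrM mulrC ler_norml.
      by apply/andP; split; [exact: g1lo | exact: g1up].
    split.
      apply: le_trans (Ce K3 K30 _); last by rewrite /C; lra.
      have -> : K3 * eps = l%:R * (4 * eps / B) by rewrite /K3; field; rewrite gt_eqF.
      apply: vnorm_pos_bound; [by rewrite divr_ge0 ?mulr_ge0 // ltW | exact: g0up].
    apply: le_trans (Ce K4 K40 _); last by rewrite /C; lra.
    have -> : K4 * eps = l%:R * (2 * B * eps + 4 * rho * eps) by rewrite /K4; ring.
    apply: vdot_bound => i; rewrite mxE.
    have /andP[h1 h2] := Bz2 i.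
    move: h1; rewrite le_eqVlt => /orP [/eqP <-|hz].
      by rewrite mulr0 mul0r normr0 addr_ge0 ?mulr_ge0 // ltW.
    have lo : - s2 ord0 i <= gb x y1 ord0 i.
      have := frechet_dir (u := (-1) *: ei i) (a := gb x y1 ord0 i) Hs2 hz.
      rewrite vdotC vdotZl vdotC vdot_ei mulN1r; apply => t tp tle.
      have hb : box B (z2 + (t * -1) *: ei i).
        apply: box_upd => //; rewrite mulrN1; apply/andP; split; lra.
      rewrite scalerA /= /ftilde !ind0 // !sube0 fbarE // -!EFinD -!EFinN /= lee_fin.
      rewrite vdot_upd; apply: eqle; ring.
    have s2b : rho * `|s2 ord0 i| <= 2 * eps.
      apply: le_trans (_ : vnorm (rho *: s2) <= _); last by apply: le_trans nw2 _; lra.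
      rewrite vnormZ (ger0_norm (ltW rho_pos)) ler_pM2l //; exact: coord_le_vnorm.
    have gab : `|gb x y1 ord0 i| <= `|s2 ord0 i| + 4 * eps / B.
      rewrite ler_norml; apply/andP; split.
        have := ler_norm (s2 ord0 i); have : 0 <= 4 * eps / B by rewrite divr_ge0 ?mulr_ge0 // ltW.
        lra.
      apply: le_trans (g0up i) _; rewrite lerDr; exact: normr_ge0.
    exact: aux_q4 rho_pos (ltW hz) h2 Bpos gab s2b.
  pose T := l%:R * Mg.
  have T0 : 0 <= T by rewrite /T mulr_ge0.
  have Q1e : 1 <= 2 / (Lfb * D) * eps.
    by rewrite mulrAC ler_pdivlMr // mul1r; lra.
  have KBe : forall Q, Q <= T * (2 + B + rho * B) -> Q <= C * eps.
    move=> Q HQ; apply: le_trans HQ _.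
    apply: le_trans (Ce KB KB0 _); last by rewrite /C; lra.
    have S0 : 0 <= T * (2 + B + rho * B) by rewrite mulr_ge0 // addr_ge0 ?addr_ge0 ?mulr_ge0.
    have -> : KB * eps = T * (2 + B + rho * B) * (2 / (Lfb * D) * eps) by rewrite /KB /T; ring.
    by rewrite -[X in X <= _]mulr1; apply: ler_wpM2l.
  have Tle : forall Q, 0 <= Q -> Q <= 2 + B + rho * B -> T * Q <= C * eps.
    by move=> Q Q0 HQ; apply: KBe; apply: ler_wpM2l.
  have rB : 0 <= rho * B by rewrite mulr_ge0.
  split.
    apply: le_trans (Tle 1 ler01 _); last lra.
    rewrite mulr1; apply: vnorm_pos_bound => // i.
    apply: le_trans (HMg x z1 i Xx Yz1); exact: ler_norm.
  split.
    apply: le_trans (Tle B B0 _); last lra.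
    rewrite /T -mulrA; apply: vdot_bound => i; rewrite normrM mulrC.
    apply: ler_pM => //; first exact: HMg.
    by have /andP[h1 h2] := By2 i; rewrite ger0_norm.
  split.
    apply: le_trans (Tle 1 ler01 _); last lra.
    rewrite mulr1; apply: vnorm_pos_bound => // i.
    apply: le_trans (HMg x y1 i Xx Yy1); exact: ler_norm.
  apply: le_trans (Tle (rho * B) rB _); last lra.
  rewrite /T -mulrA; apply: vdot_bound => i; rewrite normrM mulrC mxE.
  apply: ler_pM => //; first exact: HMg.
  rewrite normrM ger0_norm // ler_wpM2l //.
  by have /andP[h1 h2] := Bz2 i; rewrite ger0_norm.
do 4?split => //.
have Hlb : ((fbr x y1 - eps)%:E <= fbar_star fb1 fb2 gb x)%E.
  apply/ereal_infP => _ [y Hy <-].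
  have [Yy|nYy] := pselect (dom fb2 y).
    rewrite fbarE // lee_fin.
    have := Hgap' 0 y box0 Yy; rewrite vdot0l addr0.
    have : vdot y2 (gb x y) <= 0.
      apply: sumr_le0 => j _; apply: mulr_ge0_le0; first by case/andP: (By2 j).
      exact: Hy.
    move: (vdot y2 (gb x y)) (fbr x y1) (fbr x y) => a b c; lra.
  have -> : fbar fb1 fb2 x y = +oo%E.
    rewrite /fbar; move: nYy (fb2N y); rewrite /dom /=.
    by case: (fb2 y) => //= r; rewrite ltry.
  exact: leey.
rewrite fbarE //; move: Hlb; case: (fbar_star fb1 fb2 gb x) => [r| |] //=.
  by rewrite !lee_fin => h; lra.
by move=> _; rewrite addeNy leNye.
Qed.
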